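(* Let $H$ and $K$ be finite-dimensional complex Hilbert spaces, let $A\subseteq B(H)$ be a real operator system (a real linear subspace of the self-adjoint operators in $B(H)$ with $1\in A$), and let $\mathcal{C}$ be a mapping cone on $K$. Let $\phi: A\to B(K)$ be a real-linear map that is $\mathcal{C}$-positive. Then there exists a $\mathcal{C}$-positive linear map $\psi: B(H)\to B(K)$ such that $\psi(a)=\phi(a)$ for all $a\in A$.
   Context: A mapping cone $\mathcal{C}$ on $K$ is a closed convex cone of positive linear maps $B(K)\to B(K)$ such that $\alpha\in\mathcal{C}$ implies $\beta\circ\alpha\circ\gamma\in\mathcal{C}$ for all completely positive maps $\beta,\gamma: B(K)\to B(K)$. Fix an orthonormal basis of $K$ and let $b^t$ denote the transpose of $b\in B(K)$ with respect to it; $Tr$ is the usual trace. For a real or complex linear subspace $A\subseteq B(H)$ containing $1$, let $A\otimes B(K)\subseteq B(H)\otimes B(K)=B(H\otimes K)$ denote the linear span of $\{a\otimes b: a\in A, b\in B(K)\}$. For a (real-)linear map $\phi: A\to B(K)$, its dual functional $\tilde\phi$ is the linear functional on $A\otimes B(K)$ determined by $\tilde\phi(a\otimes b)=Tr(\phi(a)b^t)$. Define $P(A,\mathcal{C})=\{x\in (A\otimes B(K))_{sa} : (\iota\otimes\alpha)(x)\ge 0 \text{ for all } \alpha\in\mathcal{C}\}$, where $\iota$ is the identity map on $B(H)$ and $(\cdot)_{sa}$ denotes self-adjoint elements. The map $\phi$ is called $\mathcal{C}$-positive if $\tilde\phi(x)\ge 0$ for all $x\in P(A,\mathcal{C})$.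 (For $A=B(H)$ this applies to maps $\psi: B(H)\to B(K)$.) *)

(* Defs.v *)
(* H = C^n, K = C^m, B(H) = 'M[R[i]]_n, B(K) = 'M[R[i]]_m,
   B(H) (x) B(K) = B(H (x) K) = 'M_(n * m) via [mxtens] indexing. *)
From HB Require Import structures.
From mathcomp Require Import all_boot all_order all_algebra.
From mathcomp Require Import complex mxtens reals.

Set Implicit Arguments.
Unset Strict Implicit.
Unset Printing Implicit Defensive.

Import Order.TTheory GRing.Theory Num.Theory.
Local Open Scope ring_scope.
Local Open Scope complex_scope.

Section Defs.
Variable R : realType.
Local Notation C := R[i].

Definition adjmx p q (X : 'M[C]_(p, q)) : 'M[C]_(q, p) := (map_mx Num.conj X)^T.

Definition selfadj p (X : 'M[C]_p) : Prop := adjmx X = X.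

Definition psd p (X : 'M[C]_p) : Prop :=
  selfadj X /\ forall v : 'cV[C]_p, 0 <= (adjmx v *m X *m v) 0 0.

Definition clinear p q (f : 'M[C]_p -> 'M[C]_q) : Prop :=
  forall (c : C) (X Y : 'M[C]_p), f (c *: X + Y) = c *: f X + f Y.

Definition posmap p q (f : 'M[C]_p -> 'M[C]_q) : Prop :=
  forall X, psd X -> psd (f X).

Definition blockmx k m (x : 'M[C]_(k * m)) (i1 j1 : 'I_k) : 'M[C]_m :=
  \matrix_(i2, j2) x (mxtens_index (i1, i2)) (mxtens_index (j1, j2)).

(* the ampliation iota_k (x) alpha : B(C^k (x) C^m) -> B(C^k (x) C^m),
   i.e. alpha applied blockwise; (iota (x) alpha)(a *t b) = a *t alpha b *)
Definition ampl k m (alpha : 'M[C]_m -> 'M[C]_m) (x : 'M[C]_(k * m))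
  : 'M[C]_(k * m) :=
  \matrix_(i, j) alpha (blockmx x (mxtens_unindex i).1 (mxtens_unindex j).1)
                   (mxtens_unindex i).2 (mxtens_unindex j).2.

Definition cpmap m (f : 'M[C]_m -> 'M[C]_m) : Prop :=
  clinear f /\ forall k, posmap (@ampl k m f).

Definition cvgC (s : nat -> C) (l : C) : Prop :=
  forall e : R, 0 < e -> exists N : nat, forall t, (N <= t)%N -> `|s t - l| < e%:C.

(* mapping cone on K = C^m: a closed convex cone of positive linear maps
   B(K) -> B(K), invariant under composition with completely positive maps.
   (Closedness is w.r.t. the (unique) vector space topology of the
   finite-dimensional space of linear maps, i.e. pointwise convergence.) *)
Definition mapping_cone m (Cn : ('M[C]_m -> 'M[C]_m) -> Prop) : Prop :=
  [/\ (forall alpha, Cn alpha -> clinear alpha /\ posmap alpha),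
      (forall alpha beta, Cn alpha -> Cn beta -> Cn (fun X => alpha X + beta X)),
      (forall (t : R) alpha, 0 <= t -> Cn alpha -> Cn (fun X => t%:C *: alpha X)),
      (forall (u : nat -> 'M[C]_m -> 'M[C]_m) (alpha : 'M[C]_m -> 'M[C]_m),
          (forall t, Cn (u t)) ->
          (forall X i j, cvgC (fun t => u t X i j) (alpha X i j)) ->
          Cn alpha) &
      (forall alpha beta gamma, Cn alpha -> cpmap beta -> cpmap gamma ->
          Cn (beta \o alpha \o gamma))].

Definition real_opsys n (A : 'M[C]_n -> Prop) : Prop :=
  [/\ forall a, A a -> selfadj a,
      A 1%:M,
      (forall a b, A a -> A b -> A (a + b)) &
      (forall (t : R) a, A a -> A (t%:C *: a))].

Definition rlinear_on n m (A : 'M[C]_n -> Prop) (phi : 'M[C]_n -> 'M[C]_m) : Prop :=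
  (forall a b, A a -> A b -> phi (a + b) = phi a + phi b) /\
  (forall (t : R) a, A a -> phi (t%:C *: a) = t%:C *: phi a).

(* P(A, C): self-adjoint x in A (x) B(K) with (iota (x) alpha)(x) >= 0 for all
   alpha in C.  An element of A (x) B(K) is given as a finite sum
   x = \sum_i a_i *t b_i with a_i in A, b_i in B(K). *)
Definition in_PAC n m (Cn : ('M[C]_m -> 'M[C]_m) -> Prop) (x : 'M[C]_(n * m)) : Prop :=
  selfadj x /\ forall alpha, Cn alpha -> psd (ampl alpha x).

(* phi is C-positive: its dual functional
     tilde phi (\sum_i a_i (x) b_i) = \sum_i Tr (phi(a_i) b_i^t)
   is nonnegative on P(A, C). *)
Definition Cpositive n m (A : 'M[C]_n -> Prop) (Cn : ('M[C]_m -> 'M[C]_m) -> Prop)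
    (phi : 'M[C]_n -> 'M[C]_m) : Prop :=
  forall (k : nat) (a : 'I_k -> 'M[C]_n) (b : 'I_k -> 'M[C]_m),
    (forall i, A (a i)) ->
    in_PAC Cn (\sum_(i < k) (a i *t b i)) ->
    0 <= \sum_(i < k) \tr (phi (a i) *m (b i)^T).

End Defs.

(* Main.v *)
Require Import Defs.
From HB Require Import structures.
From mathcomp Require Import all_boot all_order all_algebra.
From mathcomp Require Import complex mxtens reals.
From Stdlib Require Import ClassicalEpsilon.
From Stdlib Require Classical_Prop.
From mathcomp Require classical_sets.
From mathcomp Require Import ring lra.
Import Order.TTheory GRing.Theory Num.Theory.
Local Open Scope ring_scope.
Local Open Scope complex_scope.
Set Implicit Arguments.
Unset Strict Implicit.
Unset Printing Implicit Defensive.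


Section Basic.
Variable R : realType.
Local Notation C := R[i].
Local Notation cj := (@Num.conj C).

Lemma adjmxE p q (X : 'M[C]_(p,q)) i j : adjmx X i j = cj (X j i).
Proof. by rewrite !mxE. Qed.

Lemma adjmxD p q (X Y : 'M[C]_(p,q)) : adjmx (X + Y) = adjmx X + adjmx Y.
Proof. by apply/matrixP=> i j; rewrite !mxE rmorphD. Qed.

Lemma adjmxN p q (X : 'M[C]_(p,q)) : adjmx (- X) = - adjmx X.
Proof. by apply/matrixP=> i j; rewrite !mxE rmorphN. Qed.

Lemma adjmxB p q (X Y : 'M[C]_(p,q)) : adjmx (X - Y) = adjmx X - adjmx Y.
Proof. by rewrite adjmxD adjmxN. Qed.

Lemma adjmx0 p q : adjmx (0 : 'M[C]_(p,q)) = 0.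
Proof. by apply/matrixP=> i j; rewrite !mxE rmorph0. Qed.

Lemma adjmxZ p q (c : C) (X : 'M[C]_(p,q)) : adjmx (c *: X) = cj c *: adjmx X.
Proof. by apply/matrixP=> i j; rewrite !mxE rmorphM. Qed.

Lemma adjmxK p q (X : 'M[C]_(p,q)) : adjmx (adjmx X) = X.
Proof. by apply/matrixP=> i j; rewrite !mxE conjCK. Qed.

Lemma adjmxM p q r (X : 'M[C]_(p,q)) (Y : 'M[C]_(q,r)) :
  adjmx (X *m Y) = adjmx Y *m adjmx X.
Proof.
apply/matrixP=> i j; rewrite !mxE rmorph_sum; apply: eq_bigr => k _.
by rewrite !mxE rmorphM mulrC.
Qed.

Lemma adjmx1 p : adjmx (1%:M : 'M[C]_p) = 1%:M.
Proof. by apply/matrixP=> i j; rewrite !mxE rmorph_nat eq_sym. Qed.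

Lemma adjmx_sum p q I (r : seq I) (P : pred I) (F : I -> 'M[C]_(p,q)) :
  adjmx (\sum_(i <- r | P i) F i) = \sum_(i <- r | P i) adjmx (F i).
Proof. by apply: (big_morph _ (@adjmxD p q) (@adjmx0 p q)). Qed.

Lemma adjmx_tens p q p' q' (a : 'M[C]_(p,q)) (b : 'M[C]_(p',q')) :
  adjmx (a *t b) = adjmx a *t adjmx b.
Proof. by apply/matrixP=> i j; rewrite !mxE rmorphM. Qed.

Lemma real_C (t : R) : t%:C \is Num.real.
Proof. by rewrite complex_real. Qed.

Lemma conj_C (t : R) : cj t%:C = t%:C.
Proof. by apply/eqP; rewrite -CrealE real_C. Qed.

Definition qf p (X : 'M[C]_p) (u w : 'cV[C]_p) : C := (adjmx u *m X *m w) 0 0.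

Lemma qfE p (X : 'M[C]_p) u w :
  qf X u w = \sum_i \sum_j cj (u i 0) * X i j * w j 0.
Proof.
rewrite /qf !mxE exchange_big /=; apply: eq_bigr => j _.
rewrite !mxE mulr_suml; apply: eq_bigr => i _; by rewrite !mxE.
Qed.

Lemma qfDm p (X Y : 'M[C]_p) u w : qf (X + Y) u w = qf X u w + qf Y u w.
Proof. by rewrite /qf mulmxDr mulmxDl mxE. Qed.
Lemma qfZm p (c : C) (X : 'M[C]_p) u w : qf (c *: X) u w = c * qf X u w.
Proof. by rewrite /qf -scalemxAr -scalemxAl mxE. Qed.
Lemma qfNm p (X : 'M[C]_p) u w : qf (- X) u w = - qf X u w.
Proof. by rewrite -scaleN1r qfZm mulN1r. Qed.
Lemma qfBm p (X Y : 'M[C]_p) u w : qf (X - Y) u w = qf X u w - qf Y u w.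
Proof. by rewrite qfDm qfNm. Qed.
Lemma qf0m p (u w : 'cV[C]_p) : qf 0 u w = 0.
Proof. by rewrite /qf mulmx0 mul0mx mxE. Qed.
Lemma qfDr p (X : 'M[C]_p) u w w' : qf X u (w + w') = qf X u w + qf X u w'.
Proof. by rewrite /qf mulmxDr mxE. Qed.
Lemma qfZr p (X : 'M[C]_p) u w c : qf X u (c *: w) = c * qf X u w.
Proof. by rewrite /qf -scalemxAr mxE. Qed.
Lemma qfDl p (X : 'M[C]_p) u u' w : qf X (u + u') w = qf X u w + qf X u' w.
Proof. by rewrite /qf adjmxD !mulmxDl mxE. Qed.
Lemma qfZl p (X : 'M[C]_p) u w c : qf X (c *: u) w = cj c * qf X u w.
Proof. by rewrite /qf adjmxZ -!scalemxAl mxE. Qed.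
Lemma qfNl p (X : 'M[C]_p) u w : qf X (- u) w = - qf X u w.
Proof. by rewrite -scaleN1r qfZl rmorphN rmorph1 mulN1r. Qed.
Lemma qfNr p (X : 'M[C]_p) u w : qf X u (- w) = - qf X u w.
Proof. by rewrite -scaleN1r qfZr mulN1r. Qed.

Lemma qf_conj p (X : 'M[C]_p) u w : cj (qf X u w) = qf (adjmx X) w u.
Proof.
rewrite !qfE rmorph_sum exchange_big /=; apply: eq_bigr => j _.
rewrite rmorph_sum; apply: eq_bigr => i _.
rewrite !rmorphM /= !mxE conjCK; ring.
Qed.

Lemma psd_real p (X : 'M[C]_p) v : selfadj X -> qf X v v \is Num.real.
Proof. by move=> sX; rewrite CrealE qf_conj sX. Qed.

End Basic.

Section Psd.
Variable R : realType.
Local Notation C := R[i].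
Local Notation cj := (@Num.conj C).

Lemma amgm (a b : C) : 0 <= a -> 0 <= b -> a * b <= a ^+ 2 + b ^+ 2.
Proof.
move=> ha hb; have ha2 : 0 <= a ^+ 2 by rewrite expr2 mulr_ge0.
have hb2 : 0 <= b ^+ 2 by rewrite expr2 mulr_ge0.
case/orP: (real_leVge (ger0_real ha) (ger0_real hb)) => h.
  apply: (le_trans (ler_wpM2r hb h)); rewrite -expr2 lerDr //.
apply: (le_trans (ler_wpM2l ha h)); rewrite -expr2 lerDl //.
Qed.

Lemma sum_pair p (a : 'I_p -> C) :
  \sum_k \sum_l (a k + a l) = (\sum_k a k) *+ (2 * p).
Proof.
rewrite (eq_bigr (fun k => a k *+ p + \sum_l a l)); last first.
  by move=> k _; rewrite big_split /= sumr_const card_ord.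
rewrite big_split /= sumr_const card_ord sumrMnl.
by rewrite -mulrnDr addnn -muln2 mulnC.
Qed.

Lemma ge0_ReC (z : C) : 0 <= z -> (complex.Re z)%:C = z.
Proof. by move=> hz; rewrite [RHS]complexE (ger0_Im hz) mulr0 addr0. Qed.

Lemma psdD p (X Y : 'M[C]_p) : psd X -> psd Y -> psd (X + Y).
Proof.
move=> [sX pX] [sY pY]; split; first by rewrite /selfadj adjmxD sX sY.
by move=> v; rewrite -/(qf _ v v) qfDm; apply: addr_ge0; [exact: pX | exact: pY].
Qed.

Lemma psdZ p (t : R) (X : 'M[C]_p) : 0 <= t -> psd X -> psd (t%:C *: X).
Proof.
move=> ht [sX pX]; split; first by rewrite /selfadj adjmxZ conj_C sX.
by move=> v; rewrite -/(qf _ v v) qfZm mulr_ge0 ?ler0c //; exact: pX.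
Qed.

Lemma psd0 p : psd (0 : 'M[C]_p).
Proof. by split; [rewrite /selfadj adjmx0 | move=> v; rewrite -/(qf _ v v) qf0m]. Qed.

Lemma qf1E p (v : 'cV[C]_p) : qf 1%:M v v = \sum_i `|v i 0| ^+ 2.
Proof.
rewrite qfE; apply: eq_bigr => i _.
rewrite (bigD1 i) //= big1 => [|j /negPf hj]; last by rewrite !mxE eq_sym hj mulr0 mul0r.
by rewrite !mxE eqxx mulr1 addr0 normCK mulrC.
Qed.

Lemma qf1_ge0 p (v : 'cV[C]_p) : 0 <= qf 1%:M v v.
Proof. by rewrite qf1E sumr_ge0 // => i _; rewrite expr2 mulr_ge0. Qed.

Lemma L0 p (H : 'M[C]_p) : selfadj H ->
  exists c : R, 0 <= c /\ psd (c%:C *: 1%:M - H) /\ psd (c%:C *: 1%:M + H).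
Proof.
move=> sH.
pose M : C := \sum_i \sum_j `|H i j|.
have M0 : 0 <= M by rewrite sumr_ge0 // => i _; rewrite sumr_ge0.
have HM i j : `|H i j| <= M.
  rewrite /M (bigD1 i) //= (bigD1 j) //= -addrA lerDl addr_ge0 // sumr_ge0 // => *; rewrite sumr_ge0 //.
pose c := complex.Re (M *+ (2 * p)).
have c0 : 0 <= M *+ (2 * p) by rewrite mulrn_wge0.
have cE : c%:C = M *+ (2 * p) by rewrite ge0_ReC.
have bound v : `|qf H v v| <= c%:C * qf 1%:M v v.
  rewrite qf1E qfE cE.
  apply: (le_trans (ler_norm_sum _ _ _)).
  apply: (@le_trans _ _ (\sum_i \sum_j M * (`|v i 0| ^+ 2 + `|v j 0| ^+ 2))).
    apply: ler_sum => k _; apply: (le_trans (ler_norm_sum _ _ _)).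
    apply: ler_sum => l _; rewrite !normrM norm_conjC.
    rewrite mulrAC mulrC; apply: ler_pM; [exact: normr_ge0 | by rewrite mulr_ge0 | exact: HM | exact: amgm].
  rewrite (eq_bigr (fun k => M * \sum_l (`|v k 0| ^+ 2 + `|v l 0| ^+ 2))); last first.
    by move=> k _; rewrite mulr_sumr.
  by rewrite -mulr_sumr sum_pair mulrnAl mulrnAr.
have c0' : 0 <= c by rewrite -ler0c cE.
exists c; split => //.
have rH v : qf H v v \is Num.real by apply: psd_real.
split; split.
- by rewrite /selfadj adjmxB adjmxZ conj_C adjmx1 sH.
- move=> v; rewrite -/(qf _ v v) qfBm qfZm subr_ge0.
  by have := bound v; rewrite real_ler_norml // => /andP[].
- by rewrite /selfadj adjmxD adjmxZ conj_C adjmx1 sH.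
- move=> v; rewrite -/(qf _ v v) qfDm qfZm -[qf H v v]opprK subr_ge0.
  by have := bound v; rewrite real_ler_norml // lerNl => /andP[].
Qed.

End Psd.

Section Pos.
Variable R : realType.
Local Notation C := R[i].
Local Notation cj := (@Num.conj C).

Lemma conj_i : cj 'i = - 'i.
Proof. by apply/eqP; rewrite eq_complex /= oppr0 !eqxx. Qed.

Lemma qf_expand p (Z : 'M[C]_p) u w (c : C) :
  qf Z (u + c *: w) (u + c *: w) =
  qf Z u u + c * qf Z u w + cj c * qf Z w u + cj c * c * qf Z w w.
Proof. rewrite !qfDl !qfDr !qfZl !qfZr; ring. Qed.

Lemma psd_qf p (Z : 'M[C]_p) v : psd Z -> 0 <= qf Z v v.
Proof. by case=> _ h; exact: h. Qed.

Lemma CSq p (Z : 'M[C]_p) u w : psd Z -> `|qf Z u w| *+ 2 <= qf Z u u + qf Z w w.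
Proof.
move=> hZ; have [sZ _] := hZ.
have [b0|bn0] := eqVneq (qf Z u w) 0.
  by rewrite b0 normr0 mul0rn addr_ge0 ?psd_qf.
pose b := qf Z u w; pose c := - `|b| / b.
have cb : c * b = - `|b| by rewrite /c divfK.
have nc : cj c * c = 1.
  rewrite -normCKC /c normrM normrN normfV normr_id divff ?expr1n //.
  by rewrite normr_eq0.
have wu : qf Z w u = cj b by rewrite /b qf_conj sZ.
have := psd_qf (u + c *: w) hZ; rewrite qf_expand nc mul1r wu -rmorphM cb.
have cr : cj (- `|b|) = - `|b| by apply/eqP; rewrite -CrealE realN normr_real.
move=> /= h; rewrite cr in h; rewrite -subr_ge0.
suff -> : qf Z u u + qf Z w w - `|qf Z u w| *+ 2 = qf Z u u + - `|b| + - `|b| + qf Z w w by [].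
by rewrite /b; ring.
Qed.

Section Clin.
Variables (p : nat) (f : 'M[C]_p -> 'M[C]_p).
Hypothesis hf : clinear f.
Lemma clin0 : f 0 = 0.
Proof.
have h := hf 1 0 0; rewrite !scale1r addr0 in h.
by apply: (addrI (f 0)); rewrite addr0 -h.
Qed.
Lemma clinD X Y : f (X + Y) = f X + f Y.
Proof. have h := hf 1 X Y; rewrite !scale1r in h; exact h. Qed.
Lemma clinZ c X : f (c *: X) = c *: f X.
Proof. by rewrite -[c *: X]addr0 hf clin0 addr0. Qed.
Lemma clinN X : f (- X) = - f X.
Proof. by rewrite -scaleN1r clinZ scaleN1r. Qed.
Lemma clinB X Y : f (X - Y) = f X - f Y.
Proof. by rewrite clinD clinN. Qed.
Lemma clin_sum I (r : seq I) (P : pred I) (F : I -> 'M[C]_p) :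
  f (\sum_(i <- r | P i) F i) = \sum_(i <- r | P i) f (F i).
Proof. by apply: (big_morph _ clinD clin0). Qed.
End Clin.

End Pos.


Section Pos2. Variable R : realType. Local Notation C := R[i]. Local Notation cj := (@Num.conj C).
Lemma mx2I p q (X Y : 'M[C]_(p,q)) : X *+ 2 = Y *+ 2 -> X = Y.
Proof.
move=> h; have : (2%:R^-1 : C) *: (X *+ 2) = 2%:R^-1 *: (Y *+ 2) by rewrite h.
by rewrite -[X *+ 2]scaler_nat -[Y *+ 2]scaler_nat !scalerA mulVf ?pnatr_eq0 // !scale1r.
Qed.

Definition posl p (f : 'M[C]_p -> 'M[C]_p) := clinear f /\ posmap f.

Lemma psd1 p : psd (1%:M : 'M[C]_p).
Proof. by split; [rewrite /selfadj adjmx1 | move=> v; exact: qf1_ge0]. Qed.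

End Pos2.


Section Pos3.
Variable R : realType.
Local Notation C := R[i].
Local Notation cj := (@Num.conj C).

Lemma qfMnm p (X : 'M[C]_p) u w n : qf (X *+ n) u w = qf X u w *+ n.
Proof. by rewrite -scaler_nat qfZm mulr_natl. Qed.

Lemma boundH p (H : 'M[C]_p) : selfadj H -> exists c : R, 0 <= c /\
  forall f, posl f -> selfadj (f H) /\
    forall u w, `|qf (f H) u w| <= c%:C * (qf (f 1%:M) u u + qf (f 1%:M) w w).
Proof.
move=> sH; have [c0 [c00 [p1 p2]]] := L0 sH.
exists c0; split => // f [lf pf].
have e1 : f H *+ 2 = f (c0%:C *: 1%:M + H) - f (c0%:C *: 1%:M - H).
  by rewrite (clinD lf) (clinB lf) mulr2n opprB [RHS]addrC [RHS]addrA subrK.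
have e2 : f (c0%:C *: 1%:M + H) + f (c0%:C *: 1%:M - H) = (c0%:C *: f 1%:M) *+ 2.
  by rewrite (clinD lf) (clinB lf) (clinZ lf) addrACA subrr addr0 mulr2n.
have Z1 := pf _ p2; have Z2 := pf _ p1.
split.
  apply: mx2I; rewrite /selfadj.
  have -> : adjmx (f H) *+ 2 = adjmx (f H *+ 2) by rewrite !mulr2n adjmxD.
  by rewrite e1 adjmxB (proj1 Z1) (proj1 Z2).
move=> u w.
have S0 : 0 <= qf (f 1%:M) u u + qf (f 1%:M) w w.
  by have F1 := pf _ (@psd1 _ p); rewrite addr_ge0 // psd_qf.
suff h4 : `|qf (f H) u w| *+ 4 <= (c0%:C * (qf (f 1%:M) u u + qf (f 1%:M) w w)) *+ 4.
  by move: h4; rewrite lerMn2r.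
have -> : `|qf (f H) u w| *+ 4 = `|qf (f H *+ 2) u w| *+ 2.
  by rewrite qfMnm normrMn -mulrnA.
rewrite e1 qfBm.
apply: (@le_trans _ _ ((`|qf (f (c0%:C *: 1%:M + H)) u w| + `|qf (f (c0%:C *: 1%:M - H)) u w|) *+ 2)).
  by apply: ler_wMn2r; apply: ler_normB.
rewrite mulrnDl.
apply: (le_trans (lerD (CSq u w Z1) (CSq u w Z2))).
rewrite addrACA -!qfDm e2 !qfMnm !qfZm -mulrnDl -mulrDr.
apply: ler_wpMn2l => //; by rewrite mulr_ge0 // ler0c.
Qed.
End Pos3.
Section Pos4.
Variable R : realType.
Local Notation C := R[i].
Local Notation cj := (@Num.conj C).

Lemma conj_half : cj (2%:R^-1) = 2%:R^-1.
Proof. by rewrite fmorphV rmorph_nat. Qed.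

Lemma hdec p (Y : 'M[C]_p) : exists H K, selfadj H /\ selfadj K /\ Y = H + 'i *: K.
Proof.
exists (2%:R^-1 *: (Y + adjmx Y)), (('i / 2%:R) *: (adjmx Y - Y)); split; last split.
- by rewrite /selfadj adjmxZ conj_half adjmxD adjmxK addrC.
- rewrite /selfadj adjmxZ adjmxB adjmxK rmorphM /= conj_i conj_half.
  by rewrite -opprB scalerN -scaleNr mulNr opprK.
- apply/matrixP=> i j; rewrite !mxE.
  have ii : 'i * 'i = -1 :> C by rewrite -expr2 sqr_i.
  by rewrite !mulrA ii; field.
Qed.

Lemma normi : `|'i : C| = 1.
Proof. by rewrite complexiE normCi. Qed.

Lemma boundY p (Y : 'M[C]_p) : exists c : R, 0 <= c /\
  forall f, posl f -> adjmx (f Y) = f (adjmx Y) /\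
    forall u w, `|qf (f Y) u w| <= c%:C * (qf (f 1%:M) u u + qf (f 1%:M) w w).
Proof.
have [H [K [sH [sK ->]]]] := hdec Y.
have [cH [cH0 hH]] := boundH sH; have [cK [cK0 hK]] := boundH sK.
exists (cH + cK); split; first exact: addr_ge0.
move=> f pf; have [lf _] := pf.
have [aH bH] := hH f pf; have [aK bK] := hK f pf.
split.
  rewrite (clinD lf) (clinZ lf) adjmxD adjmxZ aH aK conj_i.
  by rewrite adjmxD adjmxZ sH sK conj_i (clinD lf) (clinZ lf).
move=> u w; rewrite (clinD lf) (clinZ lf) qfDm qfZm.
apply: (le_trans (ler_normD _ _)); rewrite normrM normi mul1r rmorphD mulrDl.
exact: lerD.
Qed.
End Pos4.


Section Ampl.
Variable R : realType.
Local Notation C := R[i].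
Local Notation cj := (@Num.conj C).
Variables n m : nat.

Lemma sum_tens (F : 'I_(n * m) -> C) :
  \sum_k F k = \sum_(i < n) \sum_(p < m) F (mxtens_index (i, p)).
Proof.
rewrite (reindex (@mxtens_index n m)) /=; last first.
  by exists (@mxtens_unindex n m) => x _; [apply: mxtens_indexK | apply: mxtens_unindexK].
rewrite pair_big /=; apply: eq_bigr => -[i p] _ //.
Qed.

Definition ub (u : 'cV[C]_(n * m)) (i : 'I_n) : 'cV[C]_m :=
  \col_p u (mxtens_index (i, p)) 0.

Lemma amplE (f : 'M[C]_m -> 'M[C]_m) (x : 'M[C]_(n * m)) i p j q :
  ampl f x (mxtens_index (i, p)) (mxtens_index (j, q)) = f (blockmx x i j) p q.
Proof. by rewrite mxE !mxtens_indexK. Qed.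

Lemma qf_ampl (f : 'M[C]_m -> 'M[C]_m) (x : 'M[C]_(n * m)) u :
  qf (ampl f x) u u = \sum_i \sum_j qf (f (blockmx x i j)) (ub u i) (ub u j).
Proof.
rewrite qfE sum_tens; apply: eq_bigr => i _.
under eq_bigr do rewrite sum_tens.
rewrite exchange_big /=; apply: eq_bigr => j _.
rewrite qfE; apply: eq_bigr => p _; apply: eq_bigr => q _.
by rewrite amplE !mxE.
Qed.

Lemma blockmxD (x y : 'M[C]_(n * m)) i j :
  blockmx (x + y) i j = blockmx x i j + blockmx y i j.
Proof. by apply/matrixP=> p q; rewrite !mxE. Qed.
Lemma blockmxZ c (x : 'M[C]_(n * m)) i j :
  blockmx (c *: x) i j = c *: blockmx x i j.
Proof. by apply/matrixP=> p q; rewrite !mxE. Qed.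
Lemma blockmx_adj (x : 'M[C]_(n * m)) i j :
  blockmx (adjmx x) i j = adjmx (blockmx x j i).
Proof. by apply/matrixP=> p q; rewrite !mxE. Qed.
Lemma blockmx1 i j : blockmx (1%:M : 'M[C]_(n * m)) i j = (i == j)%:R *: 1%:M.
Proof.
apply/matrixP=> p q; rewrite !mxE (inj_eq (can_inj (@mxtens_indexK n m))).
by rewrite xpair_eqE; case: (i == j); rewrite ?mul1r ?mul0r.
Qed.

Lemma amplD (f : 'M[C]_m -> 'M[C]_m) (x y : 'M[C]_(n * m)) : clinear f -> ampl f (x + y) = ampl f x + ampl f y :> 'M[C]_(n * m).
Proof. by move=> lf; apply/matrixP=> P Q; rewrite !mxE blockmxD (clinD lf) mxE. Qed.
Lemma amplZ (f : 'M[C]_m -> 'M[C]_m) c (x : 'M[C]_(n * m)) : clinear f -> ampl f (c *: x) = c *: ampl f x :> 'M[C]_(n * m).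
Proof. by move=> lf; apply/matrixP=> P Q; rewrite !mxE blockmxZ (clinZ lf) mxE. Qed.
Lemma amplB (f : 'M[C]_m -> 'M[C]_m) (x y : 'M[C]_(n * m)) : clinear f -> ampl f (x - y) = ampl f x - ampl f y :> 'M[C]_(n * m).
Proof. by move=> lf; rewrite amplD // -scaleN1r amplZ // scaleN1r. Qed.
Lemma ampl0 (f : 'M[C]_m -> 'M[C]_m)  : clinear f -> ampl f 0 = 0 :> 'M[C]_(n * m).
Proof. by move=> lf; have := amplB 0 0 lf; rewrite !subrr. Qed.

Lemma ampl_adj (f : 'M[C]_m -> 'M[C]_m) (x : 'M[C]_(n * m)) : posl f -> adjmx (ampl f x) = ampl f (adjmx x) :> 'M[C]_(n * m).
Proof.
move=> pf; apply/matrixP=> P Q.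
case: (mxtens_indexP P) => i p; case: (mxtens_indexP Q) => j q.
rewrite adjmxE !amplE blockmx_adj.
have [c [_ h]] := boundY (blockmx x j i); have [h1 _] := h f pf.
by rewrite -h1 adjmxE.
Qed.

End Ampl.


Section Unit.
Variable R : realType.
Local Notation C := R[i].
Local Notation cj := (@Num.conj C).

Definition cbnd p (Y : 'M[C]_p) : R :=
  proj1_sig (constructive_indefinite_description _ (boundY Y)).

Lemma cbndP p (Y : 'M[C]_p) : 0 <= cbnd Y /\ forall f, posl f ->
  adjmx (f Y) = f (adjmx Y) /\
  forall u w, `|qf (f Y) u w| <= (cbnd Y)%:C * (qf (f 1%:M) u u + qf (f 1%:M) w w).
Proof. by rewrite /cbnd; case: (constructive_indefinite_description _ _). Qed.

Variables n m : nat.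

Lemma ampl_selfadj f (x : 'M[C]_(n * m)) : posl f -> selfadj x -> selfadj (ampl f x).
Proof. by move=> pf sx; rewrite /selfadj ampl_adj // sx. Qed.

Lemma qf_ampl1 f (u : 'cV[C]_(n * m)) : clinear f ->
  qf (ampl f 1%:M) u u = \sum_i qf (f 1%:M) (ub u i) (ub u i).
Proof.
move=> lf; rewrite qf_ampl; apply: eq_bigr => i _.
rewrite (bigD1 i) //= big1 => [|j /negPf hj]; last first.
  by rewrite blockmx1 eq_sym hj scale0r (clin0 lf) qf0m.
by rewrite blockmx1 eqxx scale1r addr0.
Qed.

Lemma L5 (x : 'M[C]_(n * m)) : selfadj x -> exists l : R, 0 < l /\
  forall f, posl f -> psd (ampl f (l%:C *: 1%:M - x)).
Proof.
move=> sx.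
pose S := \sum_i \sum_j cbnd (blockmx x i j).
have cb i j : 0 <= cbnd (blockmx x i j) by case: (cbndP (blockmx x i j)).
have S0 : 0 <= S by rewrite sumr_ge0 // => i _; rewrite sumr_ge0.
have cS i j : cbnd (blockmx x i j) <= S.
  rewrite /S (bigD1 i) //= (bigD1 j) //= -addrA lerDl addr_ge0 // sumr_ge0 // => *.
  by rewrite sumr_ge0.
have h2 := mulrn_wge0 (2 * n) S0.
exists (S *+ (2 * n) + 1); split; first by lra.
move=> f pf; have [lf pf'] := pf.
have sy : selfadj ((S *+ (2 * n) + 1)%:C *: 1%:M - x).
  by rewrite /selfadj adjmxB adjmxZ conj_C adjmx1 sx.
split; first exact: ampl_selfadj.
move=> u; rewrite -/(qf _ u u).
rewrite (amplB _ _ lf) (amplZ _ _ lf) qfBm qfZm qf_ampl1 //.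
set A := \sum_i _.
set B := qf (ampl f x) u u.
have q0 i : 0 <= qf (f 1%:M) (ub u i) (ub u i) by apply: psd_qf; apply: pf'; apply: psd1.
have A0 : 0 <= A by rewrite sumr_ge0.
have Br : B \is Num.real by apply: psd_real; apply: ampl_selfadj.
have bB : `|B| <= (S *+ (2 * n))%:C * A.
  rewrite /B qf_ampl.
  apply: (le_trans (ler_norm_sum _ _ _)).
  apply: (@le_trans _ _ (\sum_i \sum_j S%:C * (qf (f 1%:M) (ub u i) (ub u i) + qf (f 1%:M) (ub u j) (ub u j)))).
    apply: ler_sum => i _; apply: (le_trans (ler_norm_sum _ _ _)).
    apply: ler_sum => j _.
    have [_ hb] := cbndP (blockmx x i j); have [_ hb'] := hb f pf.
    apply: (le_trans (hb' _ _)); apply: ler_wpM2r; first by rewrite addr_ge0.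
    by rewrite lecR.
  rewrite (eq_bigr (fun i => S%:C * \sum_j (qf (f 1%:M) (ub u i) (ub u i) + qf (f 1%:M) (ub u j) (ub u j)))); last first.
    by move=> i _; rewrite mulr_sumr.
  by rewrite -mulr_sumr sum_pair rmorphMn mulrnAl mulrnAr.
rewrite subr_ge0; apply: (le_trans (real_ler_norm Br)); apply: (le_trans bB).
by apply: ler_wpM2r => //; rewrite lecR lerDl.
Qed.

End Unit.


Section Riesz.
Variable R : realType.
Local Notation C := R[i].
Variable N : nat.
Local Notation V := 'M[C]_N.
Variable Q : V -> Prop.
Hypothesis QD : forall x y, Q x -> Q y -> Q (x + y).
Hypothesis QZ : forall (t : R) x, 0 <= t -> Q x -> Q (t%:C *: x).
Hypothesis Qu : forall v, exists l : R, Q (l%:C *: 1%:M - v).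

Record good (W : V -> Prop) (g : V -> R) : Prop := Good {
  gW1 : W 1%:M;
  gWD : forall x y, W x -> W y -> W (x + y);
  gWZ : forall (t : R) x, W x -> W (t%:C *: x);
  ggD : forall x y, W x -> W y -> g (x + y) = g x + g y;
  ggZ : forall (t : R) x, W x -> g (t%:C *: x) = t * g x;
  ggP : forall x, W x -> Q x -> 0 <= g x }.

Definition ext (W : V -> Prop) (g : V -> R) W' g' := forall x, W x -> W' x /\ g' x = g x.

Lemma C0 : (0 : R)%:C = 0 :> C. Proof. exact: rmorph0. Qed.
Lemma C1 : (1 : R)%:C = 1 :> C. Proof. exact: rmorph1. Qed.
Lemma CN1 : (-1 : R)%:C = -1 :> C. Proof. exact: rmorphN1. Qed.

Section GoodFacts.
Variables (W : V -> Prop) (g : V -> R).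
Hypothesis gW : good W g.
Lemma gW0 : W 0.
Proof. by case: gW => W1 _ WZ _ _ _; have := WZ 0 _ W1; rewrite C0 scale0r. Qed.
Lemma gWN x : W x -> W (- x).
Proof. by case: gW => _ _ WZ _ _ _ Wx; have := WZ (-1) _ Wx; rewrite CN1 scaleN1r. Qed.
Lemma gWB x y : W x -> W y -> W (x - y).
Proof. by case: gW => _ WD _ _ _ _ Wx Wy; apply: WD => //; apply: gWN. Qed.
Lemma ggN x : W x -> g (- x) = - g x.
Proof. by case: gW => _ _ _ _ gZ _ Wx; have := gZ (-1) _ Wx; rewrite CN1 scaleN1r mulN1r. Qed.
Lemma ggB x y : W x -> W y -> g (x - y) = g x - g y.
Proof. by case: gW => _ _ _ gD _ _ Wx Wy; rewrite gD ?ggN //; apply: gWN. Qed.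
End GoodFacts.

Lemma step W g v : good W g -> exists W' g', good W' g' /\ ext W g W' g' /\ W' v.
Proof.
move=> gW; case: (Classical_Prop.classic (W v)) => Wv; first by exists W, g.
have [W1 WD WZ gD gZ gP] := gW.
pose L := fun r : R => exists w, W w /\ Q (v - w) /\ r = g w.
have lu w1 w2 : W w1 -> W w2 -> Q (v - w1) -> Q (w2 - v) -> g w1 <= g w2.
  move=> h1 h2 q1 q2; rewrite -subr_ge0 -(ggB gW) //; apply: gP; first exact: (gWB gW).
  by have := QD q2 q1; rewrite addrA subrK.
have [l1 q1] := Qu (- v); have [l2 q2] := Qu v.
have W1' := WZ (- l1) _ W1; have W2' := WZ l2 _ W1.
have q1' : Q (v - (- l1)%:C *: 1%:M) by rewrite rmorphN scaleNr opprK addrC -[v]opprK.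
have Lne : classical_sets.nonempty L by exists (g ((- l1)%:C *: 1%:M)), ((- l1)%:C *: 1%:M).
have Lub : classical_sets.ubound L (g (l2%:C *: 1%:M)).
  by move=> r [w [Ww [qw ->]]]; apply: lu.
pose c := sup L.
have hc1 w : W w -> Q (v - w) -> g w <= c.
  move=> Ww qw; apply: sup_upper_bound; first by split => //; exists (g (l2%:C *: 1%:M)).
  by exists w.
have hc2 w : W w -> Q (w - v) -> c <= g w.
  move=> Ww qw; apply: ge_sup => // r [w' [Ww' [qw' ->]]]; exact: lu.
have uniq w1 w2 (t1 t2 : R) : W w1 -> W w2 -> w1 + t1%:C *: v = w2 + t2%:C *: v ->
    t1 = t2 /\ w1 = w2.
  move=> h1 h2 e.
  have e2 : w2 - w1 = (t1 - t2)%:C *: v.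
    rewrite rmorphB scalerBl -(addrKA w1 (t1%:C *: v) (t2%:C *: v)).
    by rewrite [t1%:C *: v + w1]addrC e opprD addrACA subrr addr0.
  have t12 : t1 = t2.
    case: (eqVneq t1 t2) => [//|]; rewrite -subr_eq0 => nz; exfalso; apply: Wv.
    have -> : v = ((t1 - t2)^-1)%:C *: (w2 - w1).
      by rewrite e2 scalerA -rmorphM mulVf // rmorph1 scale1r.
    by apply: WZ; apply: (gWB gW).
  by split => //; move: e; rewrite t12 => /addIr.
pose g' x := let pr := epsilon (inhabits (0 : V, 0 : R))
    (fun pr : V * R => W pr.1 /\ x = pr.1 + pr.2%:C *: v) in g pr.1 + pr.2 * c.
have g'E w t : W w -> g' (w + t%:C *: v) = g w + t * c.
  move=> Ww; rewrite /g'.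
  set P := (fun pr : V * R => _).
  have := epsilon_spec (inhabits (0 : V, 0 : R)) P (ex_intro _ (w, t) (conj Ww erefl)).
  case: (epsilon _ P) => w' t' /= [Ww' e].
  by have [-> ->] := uniq _ _ _ _ Ww Ww' e.
pose W' x := exists w (t : R), W w /\ x = w + t%:C *: v.
exists W', g'; split; last split.
- split.
  + by exists 1%:M, 0; rewrite C0 scale0r addr0.
  + move=> x y [w1 [t1 [h1 ->]]] [w2 [t2 [h2 ->]]].
    by exists (w1 + w2), (t1 + t2); rewrite rmorphD scalerDl addrACA; split => //; apply: WD.
  + move=> s x [w [t [h ->]]]; exists (s%:C *: w), (s * t); split; first exact: WZ.
    by rewrite scalerDr rmorphM scalerA.
  + move=> x y [w1 [t1 [h1 ->]]] [w2 [t2 [h2 ->]]].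
    rewrite addrACA -scalerDl -rmorphD !g'E //; last exact: WD.
    by rewrite gD //; lra.
  + move=> s x [w [t [h ->]]].
    rewrite scalerDr scalerA -rmorphM !g'E //; last exact: WZ.
    by rewrite gZ //; lra.
  + move=> x [w [t [h ->]]] qx; rewrite g'E //.
    case: (ltrgtP t 0) => ht.
    *
      pose s := (- t)^-1.
      have s0 : 0 < s by rewrite invr_gt0 oppr_gt0.
      have st : s * t = -1 by rewrite /s invrN mulNr mulVf ?lt_eqF //.
      have Wsw : W (s%:C *: w) by apply: WZ.
      have := hc2 _ Wsw.
      have -> : s%:C *: w - v = s%:C *: (w + t%:C *: v).
        by rewrite scalerDr scalerA -rmorphM st rmorphN1 scaleN1r.
      move=> /(_ (QZ (ltW s0) qx)); rewrite gZ // => hc.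
      have nt : 0 < - t by rewrite oppr_gt0.
      have ts : t * s = -1 by rewrite mulrC.
      move: hc; rewrite -(ler_pM2l nt) mulrA !mulNr ts mulN1r opprK => hc'.
      lra.
    * pose s := t^-1.
      have s0 : 0 < s by rewrite invr_gt0.
      have st : s * t = 1 by rewrite mulVf ?gt_eqF.
      have Wsw : W ((- s)%:C *: w) by apply: WZ.
      have := hc1 _ Wsw.
      have -> : v - (- s)%:C *: w = s%:C *: (w + t%:C *: v).
        by rewrite scalerDr scalerA -rmorphM st rmorph1 scale1r rmorphN scaleNr opprK addrC.
      move=> /(_ (QZ (ltW s0) qx)); rewrite gZ // => hc.
      have ts : t * s = 1 by rewrite mulrC.
      move: hc; rewrite -(ler_pM2l ht) mulrA mulrN ts mulN1r => hc'.
      lra.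
    * by rewrite ht mul0r addr0; apply: gP => //; move: qx; rewrite ht C0 scale0r addr0.
- move=> x Wx; split; first by exists x, 0; rewrite C0 scale0r addr0.
  by have := g'E x 0 Wx; rewrite C0 scale0r !addr0 mul0r addr0.
- by exists 0, 1; split; [exact: (gW0 gW) | rewrite C1 scale1r add0r].
Qed.

End Riesz.


Section Riesz2.
Variable R : realType.
Local Notation C := R[i].
Variable N : nat.
Local Notation V := 'M[C]_N.
Variable Q : V -> Prop.
Hypothesis QD : forall x y, Q x -> Q y -> Q (x + y).
Hypothesis QZ : forall (t : R) x, 0 <= t -> Q x -> Q (t%:C *: x).
Hypothesis Qu : forall v, exists l : R, Q (l%:C *: 1%:M - v).

Lemma iter_ext (s : seq V) W g : good Q W g -> exists W' g', good Q W' g' /\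
  ext W g W' g' /\ forall v, v \in s -> W' v.
Proof.
elim: s W g => [|v s IH] W g gW.
  by exists W, g; split => //; split => // x.
have [W1 [g1 [gW1 [e1 v1]]]] := step QD QZ Qu v gW.
have [W2 [g2 [gW2 [e2 s2]]]] := IH _ _ gW1.
exists W2, g2; split => //; split.
  move=> x Wx; have [W1x g1x] := e1 x Wx; have [W2x g2x] := e2 x W1x.
  by split => //; rewrite g2x g1x.
move=> u; rewrite in_cons => /orP[/eqP -> | us]; [exact: (e2 _ v1).1 | exact: s2].
Qed.

Lemma full_ext W g : good Q W g -> exists g' : V -> R,
  [/\ (forall x, W x -> g' x = g x), (forall x y, g' (x + y) = g' x + g' y),
      (forall (t : R) x, g' (t%:C *: x) = t * g' x) & (forall x, Q x -> 0 <= g' x)].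
Proof.
move=> gW.
pose gens : seq V := [seq delta_mx i j | i <- ord_enum N, j <- ord_enum N] ++
             [seq 'i%C *: delta_mx i j | i <- ord_enum N, j <- ord_enum N].
have [W' [g' [gW' [e hs]]]] := iter_ext gens gW.
have [W1 WD WZ gD gZ gP] := gW'.
have W0 := gW0 gW'.
have allW x : W' x.
  rewrite (matrix_sum_delta x); apply: (big_ind W') => // i _.
  apply: (big_ind W') => // j _.
  rewrite [x i j]complexE scalerDl mulrC -scalerA; apply: WD; apply: WZ; apply: hs.
    by rewrite mem_cat; apply/orP; left; apply: allpairs_f; rewrite mem_ord_enum.
  by rewrite mem_cat; apply/orP; right; apply: allpairs_f; rewrite mem_ord_enum.
exists g'; split.
- by move=> x Wx; have [] := e x Wx.
- by move=> x y; apply: gD.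
- by move=> t x; apply: gZ.
- by move=> x; apply: gP.
Qed.

End Riesz2.


Section Tens.
Variable R : realType.
Local Notation C := R[i].
Local Notation cj := (@Num.conj C).
Variables n m : nat.

Lemma tensZl c (a : 'M[C]_n) (b : 'M[C]_m) : (c *: a) *t b = c *: (a *t b).
Proof. by apply/matrixP=> i j; rewrite !mxE mulrA. Qed.
Lemma tensDl (a a' : 'M[C]_n) (b : 'M[C]_m) : (a + a') *t b = a *t b + a' *t b.
Proof. by apply/matrixP=> i j; rewrite !mxE mulrDl. Qed.
Lemma tensZr c (a : 'M[C]_n) (b : 'M[C]_m) : a *t (c *: b) = c *: (a *t b).
Proof. by apply/matrixP=> i j; rewrite !mxE mulrCA. Qed.
Lemma tensDr (a : 'M[C]_n) (b b' : 'M[C]_m) : a *t (b + b') = a *t b + a *t b'.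
Proof. by apply/matrixP=> i j; rewrite !mxE mulrDr. Qed.
Lemma tensNr (a : 'M[C]_n) (b : 'M[C]_m) : a *t (- b) = - (a *t b).
Proof. by apply/matrixP=> i j; rewrite !mxE mulrN. Qed.
Lemma tens_sumr (a : 'M[C]_n) I (r : seq I) (P : pred I) (F : I -> 'M[C]_m) :
  a *t (\sum_(i <- r | P i) F i) = \sum_(i <- r | P i) a *t F i.
Proof. by apply: (big_morph _ (tensDr a) (tensmx0 a)). Qed.
Lemma tens_delta_sum (a : 'M[C]_n) (b : 'M[C]_m) :
  a *t b = \sum_p \sum_q b p q *: (a *t delta_mx p q).
Proof.
rewrite {1}(matrix_sum_delta b) tens_sumr; apply: eq_bigr => p _.
by rewrite tens_sumr; apply: eq_bigr => q _; rewrite tensZr.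
Qed.
Lemma tens11 : (1%:M : 'M[C]_n) *t (1%:M : 'M[C]_m) = 1%:M.
Proof.
apply/matrixP=> P Q; case: (mxtens_indexP P) => i p; case: (mxtens_indexP Q) => j q.
rewrite tensmxE !mxE (inj_eq (can_inj (@mxtens_indexK n m))) xpair_eqE.
by case: (i == j); case: (p == q); rewrite ?mulr1 ?mulr0 ?mul0r.
Qed.

Lemma trMT p (M N : 'M[C]_p) : \tr (M *m N^T) = \sum_i \sum_j M i j * N i j.
Proof. by apply: eq_bigr => i _; rewrite mxE; apply: eq_bigr => j _; rewrite mxE. Qed.

Lemma tr_delta p (M : 'M[C]_p) i j : \tr (M *m (delta_mx i j)^T) = M i j.
Proof.
rewrite trMT (bigD1 i) //= [X in _ + X]big1 => [|k /negPf hk]; last first.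
  by rewrite big1 // => l _; rewrite mxE hk mulr0.
rewrite addr0 (bigD1 j) //= [X in _ + X]big1 => [|l /negPf hl]; last by rewrite mxE hl andbF mulr0.
by rewrite mxE !eqxx mulr1 addr0.
Qed.

End Tens.


Section Main.
Variable R : realType.
Local Notation C := R[i].
Local Notation cj := (@Num.conj C).
Variables n m : nat.
Variable Cn : ('M[C]_m -> 'M[C]_m) -> Prop.
Hypothesis hC : mapping_cone Cn.
Local Notation V := 'M[C]_(n * m).
Local Notation P := (@in_PAC R n m Cn).

Lemma Cn_posl f : Cn f -> posl f.
Proof. by case: hC => h _ _ _ _ /h. Qed.

Lemma PD x y : P x -> P y -> P (x + y).
Proof.
move=> [sx px] [sy py]; split; first by rewrite /selfadj adjmxD sx sy.
move=> f cf; have [lf _] := Cn_posl cf; rewrite amplD //; apply: psdD; [exact: px | exact: py].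
Qed.

Lemma PZ (t : R) x : 0 <= t -> P x -> P (t%:C *: x).
Proof.
move=> t0 [sx px]; split; first by rewrite /selfadj adjmxZ conj_C sx.
move=> f cf; have [lf _] := Cn_posl cf; rewrite amplZ //; apply: psdZ => //; exact: px.
Qed.

Lemma P0 : P 0.
Proof.
split; first by rewrite /selfadj adjmx0.
move=> f cf; have [lf _] := Cn_posl cf; rewrite ampl0 //; exact: psd0.
Qed.

Lemma Punit x : selfadj x -> exists l : R, 0 < l /\ P (l%:C *: 1%:M - x).
Proof.
move=> sx; have [l [l0 hl]] := L5 sx; exists l; split => //; split.
  by rewrite /selfadj adjmxB adjmxZ conj_C adjmx1 sx.
by move=> f cf; apply: hl; apply: Cn_posl.
Qed.

Lemma P1 : P 1%:M.
Proof.
have [l [l0 hl]] := Punit (@adjmx0 R (n * m) (n * m)).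
have il : 0 < l^-1 by rewrite invr_gt0.
have := PZ (ltW il) hl.
by rewrite subr0 scalerA -rmorphM mulVf ?gt_eqF // rmorph1 scale1r.
Qed.

Definition hp (x : V) : V := 2%:R^-1 *: (x + adjmx x).

Lemma hp_selfadj x : selfadj (hp x).
Proof. by rewrite /selfadj /hp adjmxZ conj_half adjmxD adjmxK addrC. Qed.
Lemma hpD x y : hp (x + y) = hp x + hp y.
Proof. by rewrite /hp adjmxD -scalerDr addrACA. Qed.
Lemma hpZ (t : R) x : hp (t%:C *: x) = t%:C *: hp x.
Proof. by rewrite /hp adjmxZ conj_C -scalerDr !scalerA mulrC. Qed.
Lemma hp_sa x : selfadj x -> hp x = x.
Proof.
move=> sx; rewrite /hp sx -mulr2n -[x *+ 2]scaler_nat scalerA mulVf ?scale1r //.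
by rewrite pnatr_eq0.
Qed.
Lemma hp1 : hp 1%:M = 1%:M. Proof. by rewrite hp_sa // /selfadj adjmx1. Qed.
Lemma hpB x y : hp (x - y) = hp x - hp y.
Proof. by rewrite -scaleN1r -CN1 hpD hpZ CN1 scaleN1r. Qed.

Definition Qc (x : V) := P (hp x).

Lemma QcD x y : Qc x -> Qc y -> Qc (x + y).
Proof. by rewrite /Qc hpD; apply: PD. Qed.
Lemma QcZ (t : R) x : 0 <= t -> Qc x -> Qc (t%:C *: x).
Proof. by rewrite /Qc hpZ; apply: PZ. Qed.
Lemma Qcu v : exists l : R, Qc (l%:C *: 1%:M - v).
Proof.
have [l [_ hl]] := Punit (hp_selfadj v); exists l.
by rewrite /Qc hpB hpZ hp1.
Qed.

End Main.


Section Rep.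
Variable R : realType.
Local Notation C := R[i].
Local Notation cj := (@Num.conj C).
Variables n m : nat.
Variable Cn : ('M[C]_m -> 'M[C]_m) -> Prop.
Hypothesis hC : mapping_cone Cn.
Local Notation V := 'M[C]_(n * m).
Local Notation P := (@in_PAC R n m Cn).
Variable A : 'M[C]_n -> Prop.
Variable phi : 'M[C]_n -> 'M[C]_m.
Hypothesis hA : real_opsys A.
Hypothesis hpos : Cpositive A Cn phi.

Definition tsum k (a : 'I_k -> 'M[C]_n) (b : 'I_k -> 'M[C]_m) : V :=
  \sum_(i < k) a i *t b i.
Definition Tsum k (a : 'I_k -> 'M[C]_n) (b : 'I_k -> 'M[C]_m) : C :=
  \sum_(i < k) \tr (phi (a i) *m (b i)^T).
Definition isrep (x : V) k (a : 'I_k -> 'M[C]_n) (b : 'I_k -> 'M[C]_m) :=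
  (forall i, A (a i)) /\ x = tsum a b.
Definition W0 (x : V) := exists k a b, @isrep x k a b.

Lemma rep_pos x k (a : 'I_k -> _) b : isrep x a b -> P x -> 0 <= Tsum a b.
Proof. by move=> [ha ->] hx; apply: hpos. Qed.

Definition catf (T : Type) k k' (a : 'I_k -> T) (a' : 'I_k' -> T) : 'I_(k + k') -> T :=
  fun i => match split i with inl j => a j | inr j => a' j end.

Lemma catfL (T : Type) k k' (a : 'I_k -> T) (a' : 'I_k' -> T) i :
  catf a a' (lshift k' i) = a i.
Proof. by rewrite /catf (unsplitK (inl i)). Qed.
Lemma catfR (T : Type) k k' (a : 'I_k -> T) (a' : 'I_k' -> T) i :
  catf a a' (rshift k i) = a' i.
Proof. by rewrite /catf (unsplitK (inr i)). Qed.

Section Cat.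
Variables (k k' : nat) (a : 'I_k -> 'M[C]_n) (b : 'I_k -> 'M[C]_m).
Variables (a' : 'I_k' -> 'M[C]_n) (b' : 'I_k' -> 'M[C]_m).
Lemma tsum_cat : tsum (catf a a') (catf b b') = tsum a b + tsum a' b'.
Proof. by rewrite /tsum big_split_ord /=; congr (_ + _); apply: eq_bigr => i _; rewrite ?catfL ?catfR. Qed.
Lemma Tsum_cat : Tsum (catf a a') (catf b b') = Tsum a b + Tsum a' b'.
Proof. by rewrite /Tsum big_split_ord /=; congr (_ + _); apply: eq_bigr => i _; rewrite ?catfL ?catfR. Qed.
Lemma catA : (forall i, A (a i)) -> (forall i, A (a' i)) -> forall i, A (catf a a' i).
Proof. by move=> h h' i; rewrite /catf; case: (split i). Qed.
End Cat.

Lemma tsumZ k (a : 'I_k -> 'M[C]_n) b c : tsum a (fun i => c *: b i) = c *: tsum a b.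
Proof. by rewrite /tsum scaler_sumr; apply: eq_bigr => i _; rewrite tensZr. Qed.
Lemma TsumZ k (a : 'I_k -> 'M[C]_n) b c : Tsum a (fun i => c *: b i) = c * Tsum a b.
Proof.
rewrite /Tsum mulr_sumr; apply: eq_bigr => i _.
by rewrite linearZ /= -scalemxAr linearZ.
Qed.

Lemma Tsum_uniq x k (a : 'I_k -> _) b k' (a' : 'I_k' -> _) b' :
  isrep x a b -> isrep x a' b' -> Tsum a b = Tsum a' b'.
Proof.
have key k1 (a1 : 'I_k1 -> _) b1 k2 (a2 : 'I_k2 -> _) b2 :
    isrep x a1 b1 -> isrep x a2 b2 -> 0 <= Tsum a1 b1 - Tsum a2 b2.
  move=> [h1 e1] [h2 e2].
  have r : isrep 0 (catf a1 a2) (catf b1 (fun i => (-1) *: b2 i)).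
    split; first exact: catA.
    by rewrite tsum_cat tsumZ -e1 -e2 scaleN1r subrr.
  by have := rep_pos r (@P0 R n m Cn hC); rewrite Tsum_cat TsumZ mulN1r.
move=> r1 r2; apply/eqP; rewrite -subr_eq0; apply/eqP; apply: le_anti.
by rewrite key // andbT -oppr_ge0 opprB key.
Qed.

Definition rep_t := {k : nat & (('I_k -> 'M[C]_n) * ('I_k -> 'M[C]_m))%type}.
Definition rep0 : rep_t := existT _ 0%N (fun _ => 0, fun _ => 0).
Definition T (x : V) : C :=
  let r := epsilon (inhabits rep0) (fun r : rep_t => isrep x (projT2 r).1 (projT2 r).2) in
  Tsum (projT2 r).1 (projT2 r).2.

Lemma TE x k (a : 'I_k -> _) b : isrep x a b -> T x = Tsum a b.
Proof.
move=> r; rewrite /T.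
set Pr := (fun r : rep_t => _).
have := epsilon_spec (inhabits rep0) Pr (ex_intro _ (existT _ k (a, b)) r).
case: (epsilon _ Pr) => k' [a' b'] /= r'.
exact: Tsum_uniq r' r.
Qed.

End Rep.


Section CplxFacts.
Variable R : realType.
Local Notation C := R[i].
Lemma ReD (a b : C) : complex.Re (a + b) = complex.Re a + complex.Re b.
Proof. by case: a; case: b. Qed.
Lemma ReMr (t : R) (z : C) : complex.Re (t%:C * z) = t * complex.Re z.
Proof. by case: z => x y /=; rewrite mul0r subr0. Qed.
Lemma Re_ge0 (z : C) : 0 <= z -> 0 <= complex.Re z.
Proof. by rewrite lecE => /andP[]. Qed.
Lemma Im_real (z : C) : z \is Num.real -> complex.Im z = 0.
Proof. by case: z => a b; rewrite complex_real => /eqP. Qed.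
Lemma Re_ir (z : C) : z \is Num.real -> complex.Re ('i * z) = 0.
Proof. by case: z => a b; rewrite complex_real => /eqP -> /=; rewrite mul0r mulr0 subr0. Qed.
Lemma Re_i (z : C) : complex.Re ('i * z) = - complex.Im z.
Proof. by case: z => a b /=; rewrite mul0r mul1r sub0r. Qed.
End CplxFacts.

Section Rep2.
Variable R : realType.
Local Notation C := R[i].
Local Notation cj := (@Num.conj C).
Variables n m : nat.
Variable Cn : ('M[C]_m -> 'M[C]_m) -> Prop.
Hypothesis hC : mapping_cone Cn.
Local Notation V := 'M[C]_(n * m).
Local Notation P := (@in_PAC R n m Cn).
Variable A : 'M[C]_n -> Prop.
Variable phi : 'M[C]_n -> 'M[C]_m.
Hypothesis hA : real_opsys A.
Hypothesis hpos : Cpositive A Cn phi.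
Local Notation W0 := (@W0 R n m A).
Local Notation T := (@T R n m A phi).
Local Notation Tsum := (@Tsum R n m phi).
Local Notation isrep := (@isrep R n m A).

Lemma W0_1 : W0 1%:M.
Proof.
case: hA => _ A1 _ _.
exists 1%N, (fun _ => 1%:M), (fun _ => 1%:M); split => //.
by rewrite /tsum big_ord1 tens11.
Qed.

Lemma W0D x y : W0 x -> W0 y -> W0 (x + y).
Proof.
move=> [k [a [b [ha ->]]]] [k' [a' [b' [ha' ->]]]].
exists (k + k')%N, (catf a a'), (catf b b'); split; first exact: catA.
by rewrite tsum_cat.
Qed.

Lemma W0Z c x : W0 x -> W0 (c *: x).
Proof.
move=> [k [a [b [ha ->]]]]; exists k, a, (fun i => c *: b i); split => //.
by rewrite tsumZ.
Qed.

Lemma W0adj x : W0 x -> W0 (adjmx x).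
Proof.
move=> [k [a [b [ha ->]]]]; exists k, a, (fun i => adjmx (b i)); split => //.
rewrite /tsum adjmx_sum; apply: eq_bigr => i _; rewrite adjmx_tens.
by case: hA => sa _ _ _; rewrite (sa _ (ha i)).
Qed.

Lemma TD x y : W0 x -> W0 y -> T (x + y) = T x + T y.
Proof.
move=> [k [a [b r]]] [k' [a' [b' r']]].
rewrite (TE hC hpos r) (TE hC hpos r') -Tsum_cat; apply: (TE hC hpos).
case: r r' => ha -> [ha' ->]; split; first exact: catA.
by rewrite tsum_cat.
Qed.

Lemma TZ c x : W0 x -> T (c *: x) = c * T x.
Proof.
move=> [k [a [b r]]]; rewrite (TE hC hpos r) -TsumZ; apply: (TE hC hpos).
by case: r => ha ->; split => //; rewrite tsumZ.
Qed.

Lemma T_pos x : W0 x -> P x -> 0 <= T x.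
Proof. by move=> [k [a [b r]]] px; rewrite (TE hC hpos r); have := rep_pos hpos r px. Qed.

Lemma T_real h : W0 h -> selfadj h -> T h \is Num.real.
Proof.
move=> wh sh.
have sh' : selfadj (- h) by rewrite /selfadj adjmxN sh.
have [l [l0 hl]] := Punit hC sh'; rewrite opprK in hl.
have w1 := W0_1.
have wl : W0 (l%:C *: 1%:M + h) by apply: W0D => //; apply: W0Z.
have t1 : T 1%:M \is Num.real by apply: ger0_real; apply: T_pos => //; apply: P1.
have tl : T (l%:C *: 1%:M + h) \is Num.real by apply: ger0_real; apply: T_pos.
have -> : T h = T (l%:C *: 1%:M + h) - l%:C * T 1%:M.
  by rewrite TD ?TZ //; [rewrite addrC addKr | apply: W0Z].
by rewrite rpredB // rpredM // real_C.
Qed.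

End Rep2.


Section Fin.
Variable R : realType.
Local Notation C := R[i].
Local Notation cj := (@Num.conj C).
Variables n m : nat.
Variable Cn : ('M[C]_m -> 'M[C]_m) -> Prop.
Hypothesis hC : mapping_cone Cn.
Local Notation V := 'M[C]_(n * m).
Local Notation P := (@in_PAC R n m Cn).
Variable A : 'M[C]_n -> Prop.
Variable phi : 'M[C]_n -> 'M[C]_m.
Hypothesis hA : real_opsys A.
Hypothesis hpos : Cpositive A Cn phi.
Local Notation W0 := (@W0 R n m A).
Local Notation T := (@T R n m A phi).
Local Notation hp := (@hp R n m).
Local Notation Qc := (@Qc R n m Cn).

Lemma hp_dec (x : V) : x = hp x + 'i *: hp (- 'i *: x).
Proof.
apply/matrixP=> i j; rewrite !mxE rmorphM rmorphN /= conj_i.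
set z := x i j; set w := cj (x j i); set e := ('i%C : C).
have ee : e * e = -1 by rewrite /e -expr2 sqr_i.
have -> : e * (2%:R^-1 * (- e * z + - - e * w)) = 2%:R^-1 * (- (e * e) * z + (e * e) * w) by ring.
by rewrite ee; field.
Qed.

Lemma W0hp x : W0 x -> W0 (hp x).
Proof. by move=> wx; apply: W0Z; apply: W0D => //; apply: W0adj. Qed.

Definition g0 (x : V) : R := complex.Re (T x).

Lemma good0 : good Qc W0 g0.
Proof.
split.
- exact: W0_1.
- exact: W0D.
- by move=> t x; apply: W0Z.
- by move=> x y wx wy; rewrite /g0 (TD hC hpos) // ReD.
- by move=> t x wx; rewrite /g0 (TZ hC hpos) //; case: (T x) => a b /=; rewrite mul0r subr0.
- move=> x wx qx; rewrite /g0.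
  have wi : W0 (- 'i *: x) by apply: W0Z.
  rewrite [x in T x]hp_dec (TD hC hpos); [|by apply: W0hp | by apply: W0Z; apply: W0hp].
  rewrite [T ('i *: _)](TZ hC hpos); last by apply: W0hp.
  have r2 : T (hp (- 'i *: x)) \is Num.real.
    by apply: (T_real hC hA hpos); [apply: W0hp | apply: hp_selfadj].
  have p1 : 0 <= T (hp x) by apply: (T_pos hC hpos); [apply: W0hp | exact: qx].
  move: r2 p1; case: (T (hp (- 'i *: x))) => c d; case: (T (hp x)) => a b.
  rewrite complex_real lecE /= => /eqP -> /andP[_ ha].
  by rewrite mul0r mulr0 subr0 addr0.
Qed.

End Fin.


Section Final.
Variable R : realType.
Local Notation C := R[i].
Local Notation cj := (@Num.conj C).
Variables n m : nat.
Variable Cn : ('M[C]_m -> 'M[C]_m) -> Prop.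
Hypothesis hC : mapping_cone Cn.
Local Notation V := 'M[C]_(n * m).
Local Notation P := (@in_PAC R n m Cn).
Variable A : 'M[C]_n -> Prop.
Variable phi : 'M[C]_n -> 'M[C]_m.
Hypothesis hA : real_opsys A.
Hypothesis hpos : Cpositive A Cn phi.
Local Notation W0 := (@W0 R n m A).
Local Notation T := (@T R n m A phi).
Local Notation hp := (@hp R n m).
Local Notation Qc := (@Qc R n m Cn).

Lemma scale_dec (d : C) (x : V) :
  d *: x = (complex.Re d)%:C *: x + (complex.Im d)%:C *: ('i *: x).
Proof. by rewrite {1}[d]complexE scalerDl scalerA [_ * 'i%C]mulrC. Qed.

Lemma hp_iy (y : V) : selfadj y -> hp ('i *: y) = 0.
Proof. by move=> sy; rewrite /hp adjmxZ sy conj_i scaleNr subrr scaler0. Qed.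

Lemma exists_psi : exists psi : 'M[C]_n -> 'M[C]_m,
    [/\ clinear psi, Cpositive (fun _ => True) Cn psi & forall a, A a -> psi a = phi a].
Proof.
have [g [gE gD gZ gP]] := full_ext (@QcD R n m Cn hC) (@QcZ R n m Cn hC)
   (@Qcu R n m Cn hC) (good0 hC hA hpos).
have gN x : g (- x) = - g x by rewrite -scaleN1r -CN1 gZ mulN1r.
have gsc d x : g (d *: x) = complex.Re d * g x + complex.Im d * g ('i *: x).
  by rewrite scale_dec gD !gZ.
pose f (x : V) : C := Complex (g x) (- g ('i *: x)).
have fD x y : f (x + y) = f x + f y.
  by rewrite /f scalerDr !gD; apply/eqP; rewrite eq_complex /= opprD !eqxx.
have fZ c x : f (c *: x) = c * f x.
  rewrite /f scalerA gsc (gsc _ x).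
  case: c => a b; apply/eqP; rewrite eq_complex /=; apply/andP; split; apply/eqP.
  - ring.
  - rewrite (gsc ('i * (a +i* b))) /=; ring.
have f0 : f 0 = 0 by apply: (addrI (f 0)); rewrite -fD !addr0.
have fsum I (r : seq I) (Pr : pred I) (F : I -> V) :
    f (\sum_(i <- r | Pr i) F i) = \sum_(i <- r | Pr i) f (F i).
  by apply: (big_morph _ fD f0).
have fW x : W0 x -> f x = T x.
  move=> wx; rewrite /f (gE _ wx) gE; last by apply: W0Z.
  rewrite /g0 (TZ hC hpos) //; case: (T x) => a b /=.
  by apply/eqP; rewrite eq_complex /= mul0r mul1r sub0r opprK !eqxx.
have fP x : P x -> 0 <= f x.
  move=> px; have sx := proj1 px.
  have q1 : Qc x by rewrite /Qc hp_sa.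
  have sx' : selfadj (- x) by rewrite /selfadj adjmxN sx.
  have q2 : Qc ('i *: x) by rewrite /Qc hp_iy //; exact: (@P0 R n m Cn hC).
  have q3 : Qc ('i *: - x) by rewrite /Qc hp_iy //; exact: (@P0 R n m Cn hC).
  have h2 := gP _ q2; have h3 := gP _ q3.
  rewrite scalerN gN in h3.
  have h1 := gP _ q1.
  suff e0 : g ('i *: x) = 0 by rewrite /f lecE /= e0 oppr0 eqxx h1.
  lra.
pose psi (a : 'M[C]_n) : 'M[C]_m := \matrix_(p, q) f (a *t delta_mx p q).
exists psi; split.
- move=> c a a'; apply/matrixP=> p q; rewrite !mxE tensDl tensZl fD fZ.
  by [].
- move=> k a b _ hx.
  suff -> : \sum_(i < k) \tr (psi (a i) *m (b i)^T) = f (\sum_(i < k) a i *t b i).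
    exact: fP.
  rewrite fsum; apply: eq_bigr => i _.
  rewrite trMT [a i *t b i]tens_delta_sum fsum; apply: eq_bigr => p _.
  rewrite fsum; apply: eq_bigr => q _.
  by rewrite fZ mxE mulrC.
- move=> a ha; apply/matrixP=> p q; rewrite mxE fW.
    rewrite (TE hC hpos (k := 1%N) (a := fun _ => a) (b := fun _ => delta_mx p q)).
      by rewrite /Tsum big_ord1 tr_delta.
    by split => //; rewrite /tsum big_ord1.
  by exists 1%N, (fun _ => a), (fun _ => delta_mx p q); split => //; rewrite /tsum big_ord1.
Qed.

End Final.


Unset Implicit Arguments.

Theorem theorem1 (R : realType) (n m : nat)
    (A : 'M[R[i]]_n -> Prop) (Cn : ('M[R[i]]_m -> 'M[R[i]]_m) -> Prop)
    (phi : 'M[R[i]]_n -> 'M[R[i]]_m) :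
  real_opsys A -> mapping_cone Cn ->
  rlinear_on A phi -> Cpositive A Cn phi ->
  exists psi : 'M[R[i]]_n -> 'M[R[i]]_m,
    [/\ clinear psi,
        Cpositive (fun _ => True) Cn psi &
        forall a, A a -> psi a = phi a].
Proof.
move=> hA hC _ hpos; exact: (@exists_psi R n m Cn hC A phi hA hpos).
Qed.
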